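(* Let $\lambda_0$ be a real number, let $\lambda_1=\lambda_0$, let $\lambda_2,\dots,\lambda_n\in\mathbb{C}$, and suppose that $E_{(\lambda_2,\dots,\lambda_n)}$ is an extended Chebyshev space over $[a,b]$ ($a<b$) that is closed under complex conjugation. Let $p_{n,0},\dots,p_{n,n}$ be a Bernstein basis of $E_{(\lambda_0,\lambda_0,\lambda_2,\dots,\lambda_n)}$ for $\{a,b\}$ consisting of real-valued functions non-negative on $[a,b]$. Then there exist unique points $t_0,\dots,t_n\in[a,b]$ and unique positive coefficients $\alpha_0,\dots,\alpha_n$ such that the operator $B_n:C[a,b]\to E_{(\lambda_0,\lambda_0,\lambda_2,\dots,\lambda_n)}$, $B_nf=\sum_{k=0}^nf(t_k)\alpha_kp_{n,k}$, satisfies $B_n(e^{\lambda_0x})=e^{\lambda_0x}$ and $B_n(xe^{\lambda_0x})=xe^{\lambda_0x}$.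
   Context: For complex numbers $\mu_0,\dots,\mu_m$ (repetitions allowed), $E_{(\mu_0,\dots,\mu_m)}=\{f\in C^\infty(\mathbb{R},\mathbb{C}):(\frac{d}{dx}-\mu_0)\cdots(\frac{d}{dx}-\mu_m)f=0\}$ (dimension $m+1$), considered on $[a,b]$; it is closed under complex conjugation if $\bar f$ belongs to it whenever $f$ does. An $(m+1)$-dimensional space $V\subset C^m([a,b],\mathbb{C})$ is an extended Chebyshev space over $[a,b]$ if every non-zero $f\in V$ has at most $m$ zeros in $[a,b]$ counting multiplicities. A function has a zero of order $k$ at $c$ if $f(c)=\dots=f^{(k-1)}(c)=0\ne f^{(k)}(c)$ (one-sided at endpoints); a Bernstein basis for $\{a,b\}$ of an $(m+1)$-dimensional space is a system $p_{m,0},\dots,p_{m,m}$ in it with $p_{m,k}$ having a zero of order exactly $k$ at $a$ and exactly $m-k$ at $b$. *)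

(* Defs.v *)
From Stdlib Require Import Reals Lra Lia List.
From Coquelicot Require Import Coquelicot.
Open Scope R_scope.

Definition reP (f : R -> C) : R -> R := fun x => fst (f x).
Definition imP (f : R -> C) : R -> R := fun x => snd (f x).

Definition smooth (f : R -> C) : Prop :=
  forall (k : nat) (x : R), ex_derive_n (reP f) k x /\ ex_derive_n (imP f) k x.

Definition Dn (k : nat) (f : R -> C) : R -> C :=
  fun x => (Derive_n (reP f) k x, Derive_n (imP f) k x).

Definition Dop (mu : C) (f : R -> C) : R -> C :=
  fun x => Cminus (Dn 1 f x) (Cmult mu (f x)).

Definition Lop (mus : list C) (f : R -> C) : R -> C :=
  fold_right (fun mu g => Dop mu g) f mus.

Definition inE (mus : list C) (f : R -> C) : Prop :=
  smooth f /\ forall x, Lop mus f x = RtoC 0.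

Definition conj_closed (mus : list C) : Prop :=
  forall f, inE mus f -> inE mus (fun x => Cconj (f x)).

Definition zero_atleast (f : R -> C) (c : R) (k : nat) : Prop :=
  forall j, (j < k)%nat -> Dn j f c = RtoC 0.

Definition zero_order (f : R -> C) (c : R) (k : nat) : Prop :=
  zero_atleast f c k /\ Dn k f c <> RtoC 0.

(** E_(mus) (of dimension m+1 = length mus) is an extended Chebyshev space over
    [a,b]: every f in it, not identically zero on [a,b], has at most m zeros in
    [a,b] counting multiplicities; i.e. for any finite family of distinct points
    c_i of [a,b] at which f has zeros of multiplicity >= k_i, sum k_i <= m. *)
Definition ext_chebyshev (mus : list C) (a b : R) : Prop :=
  forall f, inE mus f ->
    (exists x, a <= x <= b /\ f x <> RtoC 0) ->
    forall zs : list (R * nat),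
      NoDup (map fst zs) ->
      List.Forall (fun z => a <= fst z <= b /\ zero_atleast f (fst z) (snd z)) zs ->
      (list_sum (map snd zs) <= length mus - 1)%nat.

Definition bernstein_basis (mus : list C) (a b : R) (n : nat) (p : nat -> R -> C) : Prop :=
  forall k, (k <= n)%nat ->
    inE mus (p k) /\ zero_order (p k) a k /\ zero_order (p k) b (n - k).

Definition Bop (n : nat) (t alpha : nat -> R) (p : nat -> R -> C) (f : R -> R) : R -> C :=
  fun x => fold_right Cplus (RtoC 0)
             (map (fun k => Cmult (RtoC (f (t k) * alpha k)) (p k x)) (seq 0 (S n))).

Definition reproduces (n : nat) (a b l0 : R) (p : nat -> R -> C) (t alpha : nat -> R) : Prop :=
  (forall k, (k <= n)%nat -> a <= t k <= b /\ 0 < alpha k) /\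
  (forall x, a <= x <= b ->
     Bop n t alpha p (fun y => exp (l0 * y)) x = RtoC (exp (l0 * x))) /\
  (forall x, a <= x <= b ->
     Bop n t alpha p (fun y => y * exp (l0 * y)) x = RtoC (x * exp (l0 * x))).

(* Main.v *)
Require Import Defs.
From Stdlib Require Import Reals Lra Lia List Classical FunctionalExtensionality.
From Coquelicot Require Import Coquelicot.
Open Scope R_scope.

Ltac etaD := repeat match goal with
  | |- context [Derive (fun y => ?f y) ?x] => change (Derive (fun y => f y) x) with (Derive f x)
  end.

Definition SM (f : R -> R) := forall k x, ex_derive_n f k x.

Lemma SM_loc f x n : SM f -> locally x (fun y => forall k, (k <= n)%nat -> ex_derive_n f k y).
Proof. intros H. apply filter_forall. intros y k _. apply H. Qed.

Lemma SM_ex f x : SM f -> ex_derive f x.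
Proof. intros H. exact (H 1%nat x). Qed.

Lemma Derive_n_S f k x : Derive_n f (S k) x = Derive_n (Derive f) k x.
Proof.
  replace (S k) with (k+1)%nat by lia. rewrite <- (Derive_n_comp f k 1).
  apply Derive_n_ext. intros; reflexivity.
Qed.

Lemma SM_ext f g : (forall x, f x = g x) -> SM f -> SM g.
Proof. intros E H k x. eapply ex_derive_n_ext; eauto. Qed.

Lemma SM_Derive f : SM f -> SM (Derive f).
Proof.
  intros H k x. destruct k. exact I.
  simpl. apply ex_derive_ext with (f := Derive_n f (S k)).
  intros t. rewrite Derive_n_S. reflexivity.
  exact (H (S (S k)) x).
Qed.

Lemma SM_plus f g : SM f -> SM g -> SM (fun x => f x + g x).
Proof. intros Hf Hg k x. apply ex_derive_n_plus; apply SM_loc; auto. Qed.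

Lemma SM_scal a f : SM f -> SM (fun x => a * f x).
Proof. intros Hf k x. apply ex_derive_n_scal_l; auto. Qed.

Lemma SM_const a : SM (fun _ => a).
Proof. intros k x. apply ex_derive_n_const. Qed.

Lemma SM_lin a f b g : SM f -> SM g -> SM (fun x => a * f x + b * g x).
Proof. intros. apply SM_plus; apply SM_scal; auto. Qed.

Lemma SM_minus f g : SM f -> SM g -> SM (fun x => f x - g x).
Proof. intros. apply SM_ext with (fun x => 1 * f x + (-1) * g x). intros; ring. apply SM_lin; auto. Qed.

Lemma Derive_mult' f g x : ex_derive f x -> ex_derive g x ->
  Derive (fun y => f y * g y) x = Derive f x * g x + f x * Derive g x.
Proof. intros. apply is_derive_unique. auto_derive; auto. etaD. ring. Qed.

Lemma SM_mult_aux : forall k f g, SM f -> SM g -> forall j x, (j <= k)%nat -> ex_derive_n (fun y => f y * g y) j x.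
Proof.
  induction k; intros f g Hf Hg j x Hj.
  - destruct j. exact I. lia.
  - destruct j. exact I. destruct j.
    + simpl. apply ex_derive_mult; apply SM_ex; auto.
    + simpl. apply ex_derive_ext with (f := Derive_n (fun y => Derive f y * g y + f y * Derive g y) j).
      * intros t. symmetry. change (Derive_n (fun y => f y * g y) (S j) t = Derive_n (fun y => Derive f y * g y + f y * Derive g y) j t).
        rewrite Derive_n_S. apply Derive_n_ext.
        intros u. rewrite Derive_mult'; auto; apply SM_ex; auto.
      * change (ex_derive_n (fun y => Derive f y * g y + f y * Derive g y) (S j) x).
        apply ex_derive_n_plus; apply filter_forall; intros y k0 Hk0;
        apply IHk; auto using SM_Derive; lia.
Qed.

Lemma SM_mult f g : SM f -> SM g -> SM (fun x => f x * g x).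
Proof. intros Hf Hg k x. eapply SM_mult_aux; eauto. Qed.

Lemma Dn_lin a f b g j x : SM f -> SM g ->
  Derive_n (fun y => a * f y + b * g y) j x = a * Derive_n f j x + b * Derive_n g j x.
Proof.
  intros Hf Hg. rewrite Derive_n_plus. rewrite !Derive_n_scal_l. reflexivity.
  apply filter_forall; intros; apply ex_derive_n_scal_l; apply Hf.
  apply filter_forall; intros; apply ex_derive_n_scal_l; apply Hg.
Qed.

Lemma Der_lin a f b g x : SM f -> SM g ->
  Derive (fun y => a * f y + b * g y) x = a * Derive f x + b * Derive g x.
Proof. intros. apply (Dn_lin a f b g 1 x); auto. Qed.

Lemma Dn_ext f g j x : (forall y, f y = g y) -> Derive_n f j x = Derive_n g j x.
Proof. apply Derive_n_ext. Qed.

Definition zat (f : R -> R) c m := forall j, (j < m)%nat -> Derive_n f j c = 0.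

Lemma zat_ext f g c m : (forall x, f x = g x) -> zat f c m -> zat g c m.
Proof. intros E H j Hj. rewrite <- (Dn_ext f g); auto. Qed.

Lemma zat_D f c m : zat f c (S m) -> zat (Derive f) c m.
Proof. intros H j Hj. rewrite <- Derive_n_S. apply H. lia. Qed.

Lemma zat_le f c m m' : zat f c m -> (m' <= m)%nat -> zat f c m'.
Proof. intros H Hm j Hj. apply H. lia. Qed.

Lemma zat_lin a f b g c m : SM f -> SM g -> zat f c m -> zat g c m -> zat (fun y => a * f y + b * g y) c m.
Proof. intros. intros j Hj. rewrite Dn_lin; auto. rewrite H1, H2; auto. ring. Qed.

Lemma zat_mult : forall m f h c, SM f -> SM h -> zat f c m ->
  zat (fun x => f x * h x) c m /\ Derive_n (fun x => f x * h x) m c = Derive_n f m c * h c.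
Proof.
  induction m; intros f h c Hf Hh Hz.
  - split. intros j Hj; lia. reflexivity.
  - assert (E : forall j, Derive_n (fun x => f x * h x) (S j) c =
       Derive_n (fun x => Derive f x * h x) j c + Derive_n (fun x => f x * Derive h x) j c).
    { intros j. rewrite Derive_n_S.
      rewrite (Dn_ext (Derive (fun x => f x * h x)) (fun y => 1 * (Derive f y * h y) + 1 * (f y * Derive h y))).
      rewrite Dn_lin. ring. apply SM_mult; auto using SM_Derive. apply SM_mult; auto using SM_Derive.
      intros y. rewrite Derive_mult'; try apply SM_ex; auto. ring. }
    destruct (IHm (Derive f) h c (SM_Derive _ Hf) Hh (zat_D _ _ _ Hz)) as [A1 A2].
    destruct (IHm f (Derive h) c Hf (SM_Derive _ Hh) (zat_le _ _ _ _ Hz (le_S _ _ (le_n _)))) as [B1 B2].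
    split.
    + intros j Hj. destruct j. simpl. specialize (Hz 0%nat ltac:(lia)). simpl in Hz. rewrite Hz. ring.
      rewrite E. rewrite A1, B1; try lia. ring.
    + rewrite E, A2, B2. rewrite (Hz m); [|lia]. rewrite <- Derive_n_S. ring.
Qed.


Lemma cont_SM f x : SM f -> continuity_pt f x.
Proof. intros H. apply continuity_pt_filterlim. apply (ex_derive_continuous f x). apply SM_ex; auto. Qed.

Lemma cont_eps f x0 : continuity_pt f x0 -> forall eps, 0 < eps ->
  exists d, 0 < d /\ forall y, Rabs (y - x0) < d -> Rabs (f y - f x0) < eps.
Proof.
  intros H eps He. destruct (H eps He) as [d [Hd Hy]]. exists d. split; auto.
  intros y Hyd. destruct (Req_dec y x0) as [->|Hne].
  - replace (f x0 - f x0) with 0 by ring. rewrite Rabs_R0. auto.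
  - apply (Hy y). split. split. exact I. auto. exact Hyd.
Qed.

Lemma cont_sign f a : continuity_pt f a -> f a <> 0 ->
  exists d, 0 < d /\ forall x, Rabs (x - a) < d -> f x * f a > 0.
Proof.
  intros H Ha. destruct (cont_eps f a H (Rabs (f a))) as [d [Hd Hx]].
  apply Rabs_pos_lt; auto.
  exists d. split; auto. intros x Hxd. specialize (Hx x Hxd).
  destruct (Rle_dec 0 (f a)).
  - assert (0 < f a) by lra. rewrite (Rabs_right (f a)) in Hx by lra. apply Rabs_def2 in Hx.
    apply Rlt_gt, Rmult_lt_0_compat; lra.
  - rewrite (Rabs_left (f a)) in Hx by lra. apply Rabs_def2 in Hx.
    replace (f x * f a) with ((- f x) * (- f a)) by ring. apply Rlt_gt, Rmult_lt_0_compat; lra.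
Qed.

Lemma MVT_SM f x y : SM f -> x < y -> exists z, x < z < y /\ f y - f x = Derive f z * (y - x).
Proof.
  intros H Hxy. destruct (MVT_cor2 f (Derive f) x y Hxy) as [z [Hz1 Hz2]].
  intros c _. apply is_derive_Reals. apply Derive_correct. apply SM_ex; auto.
  exists z; split; auto.
Qed.

Lemma const_D0 f a b : SM f -> (forall x, a <= x <= b -> Derive f x = 0) ->
  forall x, a <= x <= b -> f x = f a.
Proof.
  intros H Hd x Hx. destruct (Req_dec x a) as [->|Hne]; auto.
  destruct (MVT_SM f a x H) as [z [Hz E]]. lra.
  rewrite Hd in E by lra. lra.
Qed.

Lemma lim0a h a b : continuity_pt h a -> a < b -> (forall y, a < y < b -> h y = 0) -> h a = 0.
Proof.
  intros Hc Hab Hy. destruct (Req_dec (h a) 0); auto. exfalso.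
  destruct (cont_eps h a Hc (Rabs (h a))) as [d [Hd Hx]]. apply Rabs_pos_lt; auto.
  set (y := a + Rmin d (b - a) / 2).
  assert (0 < Rmin d (b-a)) by (apply Rmin_glb_lt; lra).
  assert (Rmin d (b-a) <= d) by apply Rmin_l. assert (Rmin d (b-a) <= b - a) by apply Rmin_r.
  specialize (Hx y). rewrite Hy in Hx by (unfold y; lra).
  replace (0 - h a) with (- h a) in Hx by ring. rewrite Rabs_Ropp in Hx.
  assert (Rabs (y - a) < d). { unfold y. rewrite Rabs_right; lra. } lra.
Qed.

Lemma lim0b h a b : continuity_pt h b -> a < b -> (forall y, a < y < b -> h y = 0) -> h b = 0.
Proof.
  intros Hc Hab Hy. destruct (Req_dec (h b) 0); auto. exfalso.
  destruct (cont_eps h b Hc (Rabs (h b))) as [d [Hd Hx]]. apply Rabs_pos_lt; auto.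
  set (y := b - Rmin d (b - a) / 2).
  assert (0 < Rmin d (b-a)) by (apply Rmin_glb_lt; lra).
  assert (Rmin d (b-a) <= d) by apply Rmin_l. assert (Rmin d (b-a) <= b - a) by apply Rmin_r.
  specialize (Hx y). rewrite Hy in Hx by (unfold y; lra).
  replace (0 - h b) with (- h b) in Hx by ring. rewrite Rabs_Ropp in Hx.
  assert (Rabs (y - b) < d). { unfold y. rewrite Rabs_left; lra. } lra.
Qed.

Lemma L_closed g a b : SM g -> a < b -> (forall x, a <= x <= b -> g x = 0) ->
  forall j, Derive_n g j a = 0 /\ Derive_n g j b = 0.
Proof.
  intros Hg Hab Hz j. destruct j.
  - simpl. split; apply Hz; lra.
  - assert (Hin : forall y, a < y < b -> Derive_n g (S j) y = 0).
    { intros y Hy. rewrite (Derive_n_ext_loc g (fun _ => 0)). apply Derive_n_const.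
      set (e := Rmin (y - a) (b - y)).
      assert (He : 0 < e) by (apply Rmin_glb_lt; lra).
      exists (mkposreal e He). intros t Ht. apply Hz.
      change (Rabs (t - y) < e) in Ht.
      assert (e <= y - a) by apply Rmin_l. assert (e <= b - y) by apply Rmin_r.
      apply Rabs_def2 in Ht. lra. }
    assert (Hc : forall x, continuity_pt (Derive_n g (S j)) x).
    { intros x. apply continuity_pt_filterlim. apply (ex_derive_continuous (Derive_n g (S j)) x). exact (Hg (S (S j)) x). }
    split; [eapply lim0a|eapply lim0b]; eauto.
Qed.

Lemma signA : forall m f a, SM f -> zat f a m -> Derive_n f m a <> 0 ->
  exists d, 0 < d /\ forall x, a < x < a + d -> f x * Derive_n f m a > 0.
Proof.
  induction m; intros f a Hf Hz Hn.
  - simpl in *. destruct (cont_sign f a (cont_SM f a Hf) Hn) as [d [Hd H]].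
    exists d. split; auto. intros x Hx. apply H. rewrite Rabs_right; lra.
  - assert (Hn' : Derive_n (Derive f) m a <> 0) by (rewrite <- Derive_n_S; auto).
    destruct (IHm (Derive f) a (SM_Derive f Hf) (zat_D f a m Hz) Hn') as [d [Hd H]].
    exists d. split; auto. intros x Hx.
    destruct (MVT_SM f a x Hf) as [z [Hz' E]]. lra.
    assert (Hfa : f a = 0) by (exact (Hz 0%nat ltac:(lia))).
    specialize (H z ltac:(lra)). rewrite Derive_n_S.
    replace (f x) with (Derive f z * (x - a)) by lra.
    apply Rlt_gt. replace (Derive f z * (x - a) * Derive_n (Derive f) m a) with
      ((Derive f z * Derive_n (Derive f) m a) * (x - a)) by ring.
    apply Rmult_lt_0_compat; lra.
Qed.

Lemma signB : forall m f b, SM f -> zat f b m -> Derive_n f m b <> 0 ->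
  exists d, 0 < d /\ forall x, b - d < x < b -> f x * ((-1)^m * Derive_n f m b) > 0.
Proof.
  induction m; intros f b Hf Hz Hn.
  - simpl in *. destruct (cont_sign f b (cont_SM f b Hf) Hn) as [d [Hd H]].
    exists d. split; auto. intros x Hx. replace (1 * f b) with (f b) by ring. apply H. rewrite Rabs_left; lra.
  - assert (Hn' : Derive_n (Derive f) m b <> 0) by (rewrite <- Derive_n_S; auto).
    destruct (IHm (Derive f) b (SM_Derive f Hf) (zat_D f b m Hz) Hn') as [d [Hd H]].
    exists d. split; auto. intros x Hx.
    destruct (MVT_SM f x b Hf) as [z [Hz' E]]. lra.
    assert (Hfb : f b = 0) by (exact (Hz 0%nat ltac:(lia))).
    specialize (H z ltac:(lra)). rewrite Derive_n_S.
    replace (f x) with (- (Derive f z * (b - x))) by lra.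
    apply Rlt_gt. simpl pow. replace (- (Derive f z * (b - x)) * (-1 * (-1) ^ m * Derive_n (Derive f) m b)) with
      ((Derive f z * ((-1) ^ m * Derive_n (Derive f) m b)) * (b - x)) by ring.
    apply Rmult_lt_0_compat; lra.
Qed.


Definition CS (f : R -> C) := SM (reP f) /\ SM (imP f).

Lemma smooth_CS f : smooth f <-> CS f.
Proof. split. intros H; split; intros k x; apply H. intros [H1 H2] k x; split; auto. Qed.

Lemma Dop_re mu g x : reP (Dop mu g) x = Derive (reP g) x - (fst mu * reP g x - snd mu * imP g x).
Proof. unfold Dop, Dn, reP, imP, Cminus, Cmult, Cplus, Copp. simpl. ring. Qed.

Lemma Dop_im mu g x : imP (Dop mu g) x = Derive (imP g) x - (fst mu * imP g x + snd mu * reP g x).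
Proof. unfold Dop, Dn, reP, imP, Cminus, Cmult, Cplus, Copp. simpl. ring. Qed.

Lemma DL3 f g h a b x : SM f -> SM g -> SM h ->
  Derive (fun y => f y - (a * g y - b * h y)) x = Derive f x - (a * Derive g x - b * Derive h x).
Proof. intros. apply is_derive_unique. auto_derive; repeat split; try apply SM_ex; auto. etaD. ring. Qed.

Lemma DL3' f g h a b x : SM f -> SM g -> SM h ->
  Derive (fun y => f y - (a * g y + b * h y)) x = Derive f x - (a * Derive g x + b * Derive h x).
Proof. intros. apply is_derive_unique. auto_derive; repeat split; try apply SM_ex; auto. etaD. ring. Qed.

Lemma Dop_CS mu g : CS g -> CS (Dop mu g).
Proof.
  intros [H1 H2]. split.
  - apply SM_ext with (fun x => Derive (reP g) x - (fst mu * reP g x - snd mu * imP g x)).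
    intros; rewrite Dop_re; auto.
    apply SM_minus. apply SM_Derive; auto. apply SM_minus; apply SM_scal; auto.
  - apply SM_ext with (fun x => Derive (imP g) x - (fst mu * imP g x + snd mu * reP g x)).
    intros; rewrite Dop_im; auto.
    apply SM_minus. apply SM_Derive; auto. apply SM_plus; apply SM_scal; auto.
Qed.

Lemma Lop_CS mus f : CS f -> CS (Lop mus f).
Proof. induction mus; simpl; intros; auto. apply Dop_CS; auto. Qed.

Lemma DDop_re mu g x : CS g -> Derive (reP (Dop mu g)) x =
  Derive (Derive (reP g)) x - (fst mu * Derive (reP g) x - snd mu * Derive (imP g) x).
Proof.
  intros [H1 H2]. rewrite (Derive_ext _ (fun y => Derive (reP g) y - (fst mu * reP g y - snd mu * imP g y))).
  apply DL3; auto using SM_Derive. intros; apply Dop_re.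
Qed.

Lemma DDop_im mu g x : CS g -> Derive (imP (Dop mu g)) x =
  Derive (Derive (imP g)) x - (fst mu * Derive (imP g) x + snd mu * Derive (reP g) x).
Proof.
  intros [H1 H2]. rewrite (Derive_ext _ (fun y => Derive (imP g) y - (fst mu * imP g y + snd mu * reP g y))).
  apply DL3'; auto using SM_Derive. intros; apply Dop_im.
Qed.

Lemma C_ext (u v : C) : fst u = fst v -> snd u = snd v -> u = v.
Proof. intros; apply injective_projections; auto. Qed.

Lemma Dop_comm mu r f : CS f -> Dop mu (Dop (RtoC r) f) = Dop (RtoC r) (Dop mu f).
Proof.
  intros Hf. apply functional_extensionality; intro x. apply C_ext.
  - change (reP (Dop mu (Dop (RtoC r) f)) x = reP (Dop (RtoC r) (Dop mu f)) x).
    rewrite !Dop_re. rewrite !DDop_re by auto. rewrite ?Dop_re, ?Dop_im. simpl. ring.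
  - change (imP (Dop mu (Dop (RtoC r) f)) x = imP (Dop (RtoC r) (Dop mu f)) x).
    rewrite !Dop_im. rewrite !DDop_im by auto. rewrite ?Dop_re, ?Dop_im. simpl. ring.
Qed.

Lemma Lop_comm mus r f : CS f -> Lop mus (Dop (RtoC r) f) = Dop (RtoC r) (Lop mus f).
Proof.
  induction mus; simpl; intros Hf; auto.
  rewrite IHmus by auto. apply Dop_comm. apply Lop_CS; auto.
Qed.

Definition Cadd (f g : R -> C) := fun x => Cplus (f x) (g x).
Definition Csc (s : C) (f : R -> C) := fun x => Cmult s (f x).

Lemma CS_add f g : CS f -> CS g -> CS (Cadd f g).
Proof. intros [H1 H2] [H3 H4]. split; apply SM_plus; auto. Qed.

Lemma CS_sc s f : CS f -> CS (Csc s f).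
Proof. intros [H1 H2]. split; [apply SM_minus|apply SM_plus]; apply SM_scal; auto. Qed.

Lemma Dop_add mu f g : CS f -> CS g -> Dop mu (Cadd f g) = Cadd (Dop mu f) (Dop mu g).
Proof.
  intros [H1 H2] [H3 H4]. apply functional_extensionality; intro x. apply C_ext.
  - change (reP (Dop mu (Cadd f g)) x = reP (Dop mu f) x + reP (Dop mu g) x).
    rewrite !Dop_re. rewrite (Derive_ext (reP (Cadd f g)) (fun y => 1 * reP f y + 1 * reP g y)).
    rewrite Der_lin by auto. unfold reP, imP, Cadd; simpl. ring.
    intros; unfold reP, Cadd; simpl; ring.
  - change (imP (Dop mu (Cadd f g)) x = imP (Dop mu f) x + imP (Dop mu g) x).
    rewrite !Dop_im. rewrite (Derive_ext (imP (Cadd f g)) (fun y => 1 * imP f y + 1 * imP g y)).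
    rewrite Der_lin by auto. unfold reP, imP, Cadd; simpl. ring.
    intros; unfold imP, Cadd; simpl; ring.
Qed.

Lemma Dop_sc mu s f : CS f -> Dop mu (Csc s f) = Csc s (Dop mu f).
Proof.
  intros [H1 H2]. apply functional_extensionality; intro x. apply C_ext.
  - change (reP (Dop mu (Csc s f)) x = fst s * reP (Dop mu f) x - snd s * imP (Dop mu f) x).
    rewrite !Dop_re, Dop_im. rewrite (Derive_ext (reP (Csc s f)) (fun y => fst s * reP f y + (- snd s) * imP f y)).
    rewrite Der_lin by auto. unfold reP, imP, Csc; simpl. ring.
    intros; unfold reP, imP, Csc; simpl; ring.
  - change (imP (Dop mu (Csc s f)) x = fst s * imP (Dop mu f) x + snd s * reP (Dop mu f) x).
    rewrite !Dop_im, Dop_re. rewrite (Derive_ext (imP (Csc s f)) (fun y => fst s * imP f y + snd s * reP f y)).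
    rewrite Der_lin by auto. unfold reP, imP, Csc; simpl. ring.
    intros; unfold reP, imP, Csc; simpl; ring.
Qed.

Lemma Lop_add mus f g : CS f -> CS g -> Lop mus (Cadd f g) = Cadd (Lop mus f) (Lop mus g).
Proof.
  induction mus; simpl; intros; auto. rewrite IHmus by auto. apply Dop_add; apply Lop_CS; auto.
Qed.

Lemma Lop_sc mus s f : CS f -> Lop mus (Csc s f) = Csc s (Lop mus f).
Proof.
  induction mus; simpl; intros; auto. rewrite IHmus by auto. apply Dop_sc; apply Lop_CS; auto.
Qed.

Lemma Lop_zero mus : Lop mus (fun _ => RtoC 0) = (fun _ => RtoC 0).
Proof.
  induction mus; simpl; auto. rewrite IHmus. apply functional_extensionality; intro x.
  apply C_ext.
  - change (reP (Dop a (fun _ => RtoC 0)) x = 0). rewrite Dop_re. unfold reP, imP; simpl.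
    rewrite Derive_const. ring.
  - change (imP (Dop a (fun _ => RtoC 0)) x = 0). rewrite Dop_im. unfold reP, imP; simpl.
    rewrite Derive_const. ring.
Qed.

Lemma inE_add mus f g : inE mus f -> inE mus g -> inE mus (Cadd f g).
Proof.
  intros [Hf Lf] [Hg Lg]. apply smooth_CS in Hf, Hg. split.
  apply smooth_CS, CS_add; auto.
  intros x. rewrite Lop_add by auto. unfold Cadd. rewrite Lf, Lg. apply C_ext; simpl; ring.
Qed.

Lemma inE_sc mus s f : inE mus f -> inE mus (Csc s f).
Proof.
  intros [Hf Lf]. apply smooth_CS in Hf. split.
  apply smooth_CS, CS_sc; auto.
  intros x. rewrite Lop_sc by auto. unfold Csc. rewrite Lf. apply C_ext; simpl; ring.
Qed.

Lemma inE_ext mus f g : (forall x, f x = g x) -> inE mus f -> inE mus g.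
Proof. intros E H. replace g with f; auto. apply functional_extensionality; auto. Qed.

Lemma inE_zero mus : inE mus (fun _ => RtoC 0).
Proof.
  split. apply smooth_CS; split; apply (SM_ext (fun _ => 0)); try (intros; reflexivity); apply SM_const.
  intros x. rewrite Lop_zero. reflexivity.
Qed.


Lemma Dn_expc c k x : Derive_n (fun y => exp (c * y)) k x = c ^ k * exp (c * x).
Proof.
  revert x; induction k; intros x. simpl; ring.
  simpl. rewrite (Derive_ext _ (fun y => c ^ k * exp (c * y))) by auto.
  apply is_derive_unique. auto_derive; auto. ring.
Qed.

Lemma SM_expc c : SM (fun y => exp (c * y)).
Proof.
  intros k x. destruct k. exact I. simpl.
  apply ex_derive_ext with (fun y => c ^ k * exp (c * y)).
  intros; rewrite Dn_expc; auto. auto_derive; auto.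
Qed.

Lemma SM_id : SM (fun y => y).
Proof. apply SM_ext with (fun y => y ^ 1). intros; ring. intros k x; apply ex_derive_n_pow. Qed.

Lemma Dn_const0 j c : Derive_n (fun _ => 0) j c = 0.
Proof. destruct j. reflexivity. apply Derive_n_const. Qed.

Lemma zat_C (psi : R -> R) c m : zat psi c m -> zero_atleast (fun x => RtoC (psi x)) c m.
Proof.
  intros H j Hj. unfold Dn. apply C_ext; simpl.
  - rewrite <- (H j Hj). apply Derive_n_ext. intros; reflexivity.
  - rewrite <- (Dn_const0 j c). apply Derive_n_ext. intros; reflexivity.
Qed.

Section Main.
Variables (a b l0 : R) (n : nat) (lam : nat -> C) (p : nat -> R -> C).
Definition rest := map lam (seq 2 (n - 1)).
Hypothesis Hab : a < b.
Hypothesis Hn : (2 <= n)%nat.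
Hypothesis HECT : ext_chebyshev rest a b.
Hypothesis Hconj : conj_closed rest.
Hypothesis HB : bernstein_basis (RtoC l0 :: RtoC l0 :: rest) a b n p.
Hypothesis Hpos : forall k x, (k <= n)%nat -> a <= x <= b -> snd (p k x) = 0 /\ 0 <= fst (p k x).

Definition P j := reP (p j).
Definition U x := exp (l0 * x).
Definition X x := x * exp (l0 * x).
Definition E0 x := exp (- l0 * x).
Definition op2 (H : R -> R) x := Derive (Derive H) x - 2 * l0 * Derive H x + l0 * l0 * H x.
Definition inF (phi : R -> R) := inE rest (fun x => RtoC (phi x)).
Definition ER H := SM H /\ inF (op2 H).

Lemma SM_U : SM U. Proof. apply SM_expc. Qed.
Lemma SM_E0 : SM E0. Proof. apply SM_expc. Qed.
Lemma SM_X : SM X. Proof. apply (SM_mult (fun y => y) U); [apply SM_id|apply SM_U]. Qed.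

Lemma E0U x : E0 x * U x = 1.
Proof. unfold E0, U. rewrite <- exp_plus. replace (- l0 * x + l0 * x) with 0 by ring. apply exp_0. Qed.

Lemma U_pos x : 0 < U x. Proof. apply exp_pos. Qed.
Lemma E0_pos x : 0 < E0 x. Proof. apply exp_pos. Qed.

Lemma inF_ext f g : (forall x, f x = g x) -> inF f -> inF g.
Proof. intros E. apply inE_ext. intros; rewrite E; auto. Qed.

Lemma inF_zero : inF (fun _ => 0).
Proof. apply inE_zero. Qed.

Lemma inF_lin al f be g : inF f -> inF g -> inF (fun x => al * f x + be * g x).
Proof.
  intros Hf Hg. eapply inE_ext. 2: apply (inE_add _ _ _ (inE_sc _ (RtoC al) _ Hf) (inE_sc _ (RtoC be) _ Hg)).
  intros x. unfold Cadd, Csc. apply C_ext; simpl; ring.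
Qed.

Lemma op2_lin al f be g x : SM f -> SM g ->
  op2 (fun y => al * f y + be * g y) x = al * op2 f x + be * op2 g x.
Proof.
  intros Hf Hg. unfold op2.
  rewrite (Derive_ext (Derive (fun y => al * f y + be * g y)) (fun y => al * Derive f y + be * Derive g y)).
  rewrite !Der_lin; auto using SM_Derive. ring.
  intros; apply Der_lin; auto.
Qed.

Lemma op2_ext f g x : (forall y, f y = g y) -> op2 f x = op2 g x.
Proof.
  intros E. unfold op2. rewrite (Derive_ext f g) by auto.
  rewrite (Derive_ext (Derive f) (Derive g)). rewrite E; auto.
  intros; apply Derive_ext; auto.
Qed.

Lemma ER_ext f g : (forall y, f y = g y) -> ER f -> ER g.
Proof.
  intros E [H1 H2]. split. eapply SM_ext; eauto.
  eapply inF_ext; [|exact H2]. intros; apply op2_ext; auto.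
Qed.

Lemma ER_lin al f be g : ER f -> ER g -> ER (fun y => al * f y + be * g y).
Proof.
  intros [F1 F2] [G1 G2]. split. apply SM_lin; auto.
  eapply inF_ext; [|apply (inF_lin al _ be _ F2 G2)]. intros; rewrite op2_lin; auto.
Qed.

Lemma ER_zero : ER (fun _ => 0).
Proof.
  split. apply SM_const. eapply inF_ext; [|apply inF_zero]. intros x.
  unfold op2. rewrite (Derive_ext (Derive (fun _ => 0)) (fun _ => 0)).
  rewrite !Derive_const. ring. intros; apply Derive_const.
Qed.

Lemma DU x : Derive U x = l0 * U x.
Proof. apply is_derive_unique. unfold U. auto_derive; auto. ring. Qed.

Lemma DX x : Derive X x = U x + l0 * X x.
Proof. apply is_derive_unique. unfold U, X. auto_derive; auto. ring. Qed.

Lemma ER_U : ER U.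
Proof.
  split. apply SM_U. eapply inF_ext; [|apply inF_zero]. intros x.
  unfold op2. rewrite (Derive_ext (Derive U) (fun y => l0 * U y)) by apply DU.
  rewrite Derive_scal, !DU. ring.
Qed.

Lemma ER_X : ER X.
Proof.
  split. apply SM_X. eapply inF_ext; [|apply inF_zero]. intros x.
  unfold op2. rewrite (Derive_ext (Derive X) (fun y => 1 * U y + l0 * X y)).
  rewrite Der_lin by (apply SM_U || apply SM_X). rewrite DU, !DX. ring.
  intros; rewrite DX; ring.
Qed.

Lemma P_in j : (j <= n)%nat -> inE (RtoC l0 :: RtoC l0 :: rest) (p j).
Proof. intros Hj. apply (HB j Hj). Qed.

Lemma SM_P j : (j <= n)%nat -> SM (P j).
Proof. intros Hj. destruct (P_in j Hj) as [Hs _]. apply smooth_CS in Hs. apply Hs. Qed.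

Lemma ER_P j : (j <= n)%nat -> ER (P j).
Proof.
  intros Hj. split. apply SM_P; auto.
  destruct (P_in j Hj) as [Hs HL]. apply smooth_CS in Hs.
  set (phi := Dop (RtoC l0) (Dop (RtoC l0) (p j))).
  assert (Hphi : inE rest phi).
  { split. apply smooth_CS. apply Dop_CS, Dop_CS; auto.
    intros x. unfold phi. rewrite !Lop_comm; auto. apply HL. apply Dop_CS; auto. }
  assert (Hc := Hconj _ Hphi).
  assert (Hpsi := inE_sc _ (RtoC (/2)) _ (inE_add _ _ _ Hphi Hc)).
  assert (Ephi : forall x, fst (phi x) = op2 (P j) x).
  { intros x. change (reP phi x = op2 (P j) x). unfold phi. rewrite Dop_re, DDop_re by auto.
    rewrite Dop_re. unfold op2, P. simpl. ring. }
  clearbody phi.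
  eapply inE_ext; [|exact Hpsi]. intros x. unfold Csc, Cadd. apply C_ext.
  - simpl. rewrite Ephi. field.
  - simpl. ring.
Qed.

Lemma OP2_W H w x : SM H -> (forall y, w y = H y * E0 y) -> op2 H x = Derive (Derive w) x * U x.
Proof.
  intros HH Ew.
  assert (D1 : forall y, Derive w y = (Derive H y - l0 * H y) * E0 y).
  { intros y. rewrite (Derive_ext w (fun y => H y * exp (- l0 * y))) by (intros; rewrite Ew; auto).
    apply is_derive_unique. auto_derive. apply SM_ex; auto. unfold E0. etaD. ring. }
  rewrite (Derive_ext (Derive w) (fun y => (Derive H y - l0 * H y) * exp (- l0 * y))) by (intros; rewrite D1; auto).
  assert (E := E0U x). unfold E0 in E.
  unfold op2. replace (Derive (fun y => (Derive H y - l0 * H y) * exp (- l0 * y)) x) with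
   ((Derive (Derive H) x - l0 * Derive H x - l0 * (Derive H x - l0 * H x)) * exp (- l0 * x)).
  transitivity ((Derive (Derive H) x - 2 * l0 * Derive H x + l0 * l0 * H x) * (exp (- l0 * x) * U x)).
  rewrite E; ring. ring.
  symmetry. apply is_derive_unique. auto_derive. split. apply SM_ex, SM_Derive; auto. split; auto. apply SM_ex; auto.
  etaD. ring.
Qed.

Lemma KEY0 H w : ER H -> SM w -> (forall x, w x = H x * E0 x) ->
  forall zs, NoDup (map fst zs) ->
  List.Forall (fun z => a <= fst z <= b /\ zat (Derive (Derive w)) (fst z) (snd z)) zs ->
  (n - 1 <= list_sum (map snd zs))%nat ->
  forall x, a <= x <= b -> Derive (Derive w) x = 0.
Proof.
  intros [HH HF] Hw Ew zs Hnd Hall Hsum.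
  set (psi := op2 H).
  assert (Epsi : forall y, psi y = Derive (Derive w) y * U y) by (intros; apply OP2_W; auto).
  assert (Hw2 : SM (Derive (Derive w))) by (apply SM_Derive, SM_Derive; auto).
  destruct (classic (exists x, a <= x <= b /\ RtoC (psi x) <> RtoC 0)) as [Hex|Hno].
  - exfalso. assert (Hl := HECT _ HF Hex zs Hnd).
    assert (Hlen : length rest = (n - 1)%nat) by (unfold rest; rewrite length_map, length_seq; auto).
    rewrite Hlen in Hl. cut ((list_sum (map snd zs) <= n - 1 - 1)%nat). lia.
    apply Hl. eapply Forall_impl; [|exact Hall]. intros [c m] [Hc Hz]. split; auto.
    apply zat_C. simpl in *. eapply zat_ext. intros y; symmetry; apply Epsi.
    apply zat_mult; auto. apply SM_U.
  - intros x Hx. destruct (Req_dec (psi x) 0) as [E|E].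
    + rewrite Epsi in E. assert (Hu := U_pos x). apply Rmult_integral in E. destruct E; auto. lra.
    + exfalso. apply Hno. exists x. split; auto. intros E'. apply E. injection E'; auto.
Qed.


Fixpoint lin (be : nat -> R) (m : nat) (x : R) : R :=
  match m with O => 0 | S m' => lin be m' x + be m' * P m' x end.
Fixpoint Dlin (be : nat -> R) (m i : nat) (x : R) : R :=
  match m with O => 0 | S m' => Dlin be m' i x + be m' * Derive_n (P m') i x end.

Lemma ER_lin_ m be : (m <= S n)%nat -> ER (lin be m).
Proof.
  induction m; intros Hm. apply ER_zero.
  apply ER_ext with (fun x => 1 * lin be m x + be m * P m x). intros; simpl; ring.
  apply ER_lin. apply IHm; lia. apply ER_P; lia.
Qed.

Lemma SM_lin_ m be : (m <= S n)%nat -> SM (lin be m).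
Proof. intros; apply ER_lin_; auto. Qed.

Lemma Dn_lin_ m be i x : (m <= S n)%nat -> Derive_n (lin be m) i x = Dlin be m i x.
Proof.
  induction m; intros Hm. simpl. apply Dn_const0.
  simpl. rewrite (Dn_ext _ (fun x => 1 * lin be m x + be m * P m x)) by (intros; simpl; ring).
  rewrite Dn_lin. rewrite IHm by lia. ring. apply SM_lin_; lia. apply SM_P; lia.
Qed.

Lemma lin_ext be be' m x : (forall j, (j < m)%nat -> be j = be' j) -> lin be m x = lin be' m x.
Proof. induction m; intros H; simpl; auto. rewrite IHm by (intros; apply H; lia). rewrite H by lia. auto. Qed.

Lemma lin_minus be ga m x : lin (fun j => be j - ga j) m x = lin be m x - lin ga m x.
Proof. induction m; simpl. ring. rewrite IHm. ring. Qed.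

Lemma Dlin_zero be m i x : (forall j, (j < m)%nat -> be j = 0) -> Dlin be m i x = 0.
Proof. induction m; intros H; simpl; auto. rewrite IHm by (intros; apply H; lia). rewrite H by lia. ring. Qed.

Lemma PzA j : (j <= n)%nat -> zat (P j) a j.
Proof.
  intros Hj i Hi. destruct (HB j Hj) as [_ [[Hz _] _]]. specialize (Hz i Hi).
  unfold Dn in Hz. injection Hz; auto.
Qed.

Lemma PzB j : (j <= n)%nat -> zat (P j) b (n - j).
Proof.
  intros Hj i Hi. destruct (HB j Hj) as [_ [_ [Hz _]]]. specialize (Hz i Hi).
  unfold Dn in Hz. injection Hz; auto.
Qed.

Lemma ImP0 j : (j <= n)%nat -> forall i, Derive_n (imP (p j)) i a = 0 /\ Derive_n (imP (p j)) i b = 0.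
Proof.
  intros Hj. destruct (P_in j Hj) as [Hs _]. apply smooth_CS in Hs.
  apply L_closed; auto. apply Hs. intros x Hx. apply (Hpos j x Hj Hx).
Qed.

Lemma PnzA j : (j <= n)%nat -> Derive_n (P j) j a <> 0.
Proof.
  intros Hj E. destruct (HB j Hj) as [_ [[_ Hz] _]]. apply Hz. unfold Dn.
  apply C_ext; simpl. exact E. apply ImP0; auto.
Qed.

Lemma PnzB j : (j <= n)%nat -> Derive_n (P j) (n - j) b <> 0.
Proof.
  intros Hj E. destruct (HB j Hj) as [_ [_ [_ Hz]]]. apply Hz. unfold Dn.
  apply C_ext; simpl. exact E. apply ImP0; auto.
Qed.

Lemma pickA d : 0 < d -> exists x, a < x < a + d /\ x < b.
Proof.
  intros Hd. exists (a + Rmin d (b - a) / 2).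
  assert (0 < Rmin d (b-a)) by (apply Rmin_glb_lt; lra).
  assert (Rmin d (b-a) <= d) by apply Rmin_l. assert (Rmin d (b-a) <= b - a) by apply Rmin_r. lra.
Qed.

Lemma pickB d : 0 < d -> exists x, b - d < x < b /\ a < x.
Proof.
  intros Hd. exists (b - Rmin d (b - a) / 2).
  assert (0 < Rmin d (b-a)) by (apply Rmin_glb_lt; lra).
  assert (Rmin d (b-a) <= d) by apply Rmin_l. assert (Rmin d (b-a) <= b - a) by apply Rmin_r. lra.
Qed.

Lemma PposA j : (j <= n)%nat -> 0 < Derive_n (P j) j a.
Proof.
  intros Hj. destruct (Rlt_or_le 0 (Derive_n (P j) j a)) as [H|H]; auto. exfalso.
  assert (Hne := PnzA j Hj).
  destruct (signA j (P j) a (SM_P j Hj) (PzA j Hj) Hne) as [d [Hd Hs]].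
  destruct (pickA d Hd) as [x [Hx1 Hx2]]. specialize (Hs x Hx1).
  destruct (Hpos j x Hj ltac:(lra)) as [_ Hp]. change (fst (p j x)) with (P j x) in Hp.
  assert (P j x * Derive_n (P j) j a <= 0).
  { replace (P j x * Derive_n (P j) j a) with (- (P j x * (- Derive_n (P j) j a))) by ring.
    assert (0 <= P j x * (- Derive_n (P j) j a)) by (apply Rmult_le_pos; lra). lra. }
  lra.
Qed.

Lemma PposB j : (j <= n)%nat -> 0 < (-1) ^ (n - j) * Derive_n (P j) (n - j) b.
Proof.
  intros Hj. destruct (Rlt_or_le 0 ((-1) ^ (n - j) * Derive_n (P j) (n - j) b)) as [H|H]; auto. exfalso.
  assert (Hne := PnzB j Hj).
  destruct (signB (n - j) (P j) b (SM_P j Hj) (PzB j Hj) Hne) as [d [Hd Hs]].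
  destruct (pickB d Hd) as [x [Hx1 Hx2]]. specialize (Hs x Hx1).
  destruct (Hpos j x Hj ltac:(lra)) as [_ Hp]. change (fst (p j x)) with (P j x) in Hp.
  set (D := (-1) ^ (n - j) * Derive_n (P j) (n - j) b) in *.
  assert (P j x * D <= 0).
  { replace (P j x * D) with (- (P j x * (- D))) by ring.
    assert (0 <= P j x * (- D)) by (apply Rmult_le_pos; lra). lra. }
  lra.
Qed.

Lemma tailA be i m : (S i <= m <= S n)%nat -> Dlin be m i a = Dlin be (S i) i a.
Proof.
  induction m; intros Hm. lia.
  destruct (Nat.eq_dec m i) as [->|Hne]; auto.
  simpl. rewrite IHm by lia. rewrite (PzA m) by lia. simpl. ring.
Qed.

Lemma headB be i m : (m <= n - i)%nat -> (i <= n)%nat -> Dlin be m i b = 0.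
Proof.
  induction m; intros Hm Hi; simpl; auto. rewrite IHm by lia. rewrite (PzB m) by lia. ring.
Qed.

Lemma DmE T be m i y : SM T -> (m <= S n)%nat ->
  Derive_n (fun x => T x - lin be m x) i y = Derive_n T i y - Dlin be m i y.
Proof.
  intros HT Hm. rewrite (Dn_ext _ (fun x => 1 * T x + (-1) * lin be m x)) by (intros; ring).
  rewrite Dn_lin; auto. rewrite Dn_lin_; auto. ring. apply SM_lin_; auto.
Qed.

Lemma kill T : SM T -> exists be, zat (fun x => T x - lin be (S n) x) a (S n).
Proof.
  intros HT. cut (forall m, (m <= S n)%nat -> exists be, zat (fun x => T x - lin be m x) a m).
  { intros H; apply H; auto. }
  induction m; intros Hm.
  - exists (fun _ => 0). intros j Hj; lia.
  - destruct (IHm ltac:(lia)) as [be Hbe].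
    set (ga := Derive_n (fun x => T x - lin be m x) m a / Derive_n (P m) m a).
    exists (fun j => if Nat.eqb j m then ga else be j).
    assert (Hl : forall x, lin (fun j => if Nat.eqb j m then ga else be j) m x = lin be m x).
    { intros x. apply lin_ext. intros j Hj. destruct (Nat.eqb_spec j m); auto; lia. }
    intros i Hi. rewrite DmE by (auto; lia). simpl. rewrite Nat.eqb_refl.
    assert (Hd : Dlin (fun j => if Nat.eqb j m then ga else be j) m i a = Dlin be m i a).
    { rewrite <- !Dn_lin_ by lia. apply Dn_ext. intros; apply Hl. }
    rewrite Hd.
    assert (Hz : Derive_n T i a - Dlin be m i a = Derive_n (fun x => T x - lin be m x) i a).
    { rewrite DmE; auto; lia. }
    destruct (Nat.eq_dec i m) as [->|Hne].
    + unfold ga. rewrite <- Hz. field. apply PnzA; lia.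
    + rewrite (PzA m) by lia. rewrite Hbe in Hz by lia. lra.
Qed.

Ltac nodup_tac := repeat constructor; simpl; intuition lra.

Lemma KEY1 H w x1 m1 : ER H -> SM w -> (forall x, w x = H x * E0 x) ->
  a <= x1 <= b -> zat (Derive (Derive w)) x1 m1 -> (n - 1 <= m1)%nat ->
  forall x, a <= x <= b -> Derive (Derive w) x = 0.
Proof.
  intros. apply (KEY0 H w H0 H1 H2 ((x1,m1)::nil)); auto.
  nodup_tac. repeat (apply Forall_cons || apply Forall_nil); simpl; try (split; [lra|auto]). simpl; lia.
Qed.

Lemma KEY2 H w x1 m1 x2 m2 : ER H -> SM w -> (forall x, w x = H x * E0 x) ->
  a <= x1 -> x1 < x2 -> x2 <= b -> zat (Derive (Derive w)) x1 m1 -> zat (Derive (Derive w)) x2 m2 ->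
  (n - 1 <= m1 + m2)%nat ->
  forall x, a <= x <= b -> Derive (Derive w) x = 0.
Proof.
  intros. apply (KEY0 H w H0 H1 H2 ((x1,m1)::(x2,m2)::nil)); auto.
  nodup_tac. repeat (apply Forall_cons || apply Forall_nil); simpl; try (split; [lra|auto]). simpl; lia.
Qed.

Lemma KEY3 H w x1 m1 x2 m2 x3 m3 : ER H -> SM w -> (forall x, w x = H x * E0 x) ->
  a <= x1 -> x1 < x2 -> x2 < x3 -> x3 <= b ->
  zat (Derive (Derive w)) x1 m1 -> zat (Derive (Derive w)) x2 m2 -> zat (Derive (Derive w)) x3 m3 ->
  (n - 1 <= m1 + m2 + m3)%nat ->
  forall x, a <= x <= b -> Derive (Derive w) x = 0.
Proof.
  intros. apply (KEY0 H w H0 H1 H2 ((x1,m1)::(x2,m2)::(x3,m3)::nil)); auto.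
  nodup_tac. repeat (apply Forall_cons || apply Forall_nil); simpl; try (split; [lra|auto]). simpl; lia.
Qed.

Lemma KEY4 H w x1 m1 x2 m2 x3 m3 x4 m4 : ER H -> SM w -> (forall x, w x = H x * E0 x) ->
  a <= x1 -> x1 < x2 -> x2 < x3 -> x3 < x4 -> x4 <= b ->
  zat (Derive (Derive w)) x1 m1 -> zat (Derive (Derive w)) x2 m2 -> zat (Derive (Derive w)) x3 m3 ->
  zat (Derive (Derive w)) x4 m4 ->
  (n - 1 <= m1 + m2 + m3 + m4)%nat ->
  forall x, a <= x <= b -> Derive (Derive w) x = 0.
Proof.
  intros. apply (KEY0 H w H0 H1 H2 ((x1,m1)::(x2,m2)::(x3,m3)::(x4,m4)::nil)); auto.
  nodup_tac. repeat (apply Forall_cons || apply Forall_nil); simpl; try (split; [lra|auto]). simpl; lia.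
Qed.

Lemma zat1 f y : f y = 0 -> zat f y 1.
Proof. intros H j Hj. destruct j; [exact H|lia]. Qed.

Lemma rolle g x y : SM g -> x < y -> g x = 0 -> g y = 0 -> exists z, x < z < y /\ Derive g z = 0.
Proof.
  intros Hg Hxy Hx Hy. destruct (MVT_SM g x y Hg Hxy) as [z [Hz E]]. exists z. split; auto.
  rewrite Hx, Hy in E. assert (E' : Derive g z * (y - x) = 0) by lra.
  apply Rmult_integral in E'. destruct E'; auto. lra.
Qed.

Lemma zat0 f y m : zat f y (S m) -> f y = 0.
Proof. intros H. exact (H 0%nat ltac:(lia)). Qed.

Lemma SM_w H : SM H -> SM (fun x => H x * E0 x).
Proof. intros; apply SM_mult; auto; apply SM_E0. Qed.

Lemma needA H : ER H -> zat H a (S n) -> forall x, a <= x <= b -> H x = 0.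
Proof.
  intros HE Hz x Hx. set (w := fun x => H x * E0 x).
  assert (Hw : SM w) by (apply SM_w, HE).
  assert (zw : zat w a (S n)) by (apply zat_mult; auto; [apply HE|apply SM_E0]).
  assert (z1 := zat_D _ _ _ zw).
  assert (z2 : zat (Derive (Derive w)) a (n - 1)).
  { apply zat_D. replace (S (n - 1)) with n by lia. auto. }
  assert (D2 := KEY1 H w a (n-1) HE Hw (fun _ => eq_refl) ltac:(lra) z2 (le_n _)).
  assert (D1 : forall y, a <= y <= b -> Derive w y = 0).
  { intros y Hy. rewrite (const_D0 (Derive w) a b) by (auto using SM_Derive). apply (zat0 _ _ (n-1)).
    replace (S (n-1)) with n by lia. auto. }
  assert (E : w x = w a) by (apply (const_D0 w a b); auto).
  assert (wa : w a = 0) by (apply (zat0 _ _ n); auto).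
  assert (Hu := E0_pos x). rewrite wa in E. unfold w in E.
  apply Rmult_integral in E. destruct E; auto. lra.
Qed.

Lemma zatD' f c m : (1 <= m)%nat -> zat f c m -> zat (Derive f) c (m - 1).
Proof. intros Hm H. apply zat_D. replace (S (m - 1)) with m by lia. auto. Qed.

Lemma zat0' f c m : (1 <= m)%nat -> zat f c m -> f c = 0.
Proof. intros Hm H. exact (H 0%nat ltac:(lia)). Qed.

Lemma Qlem T be : SM T -> zat (fun x => T x - lin be (S n) x) a (S n) -> forall k, (k <= n)%nat ->
  zat (fun x => T x - lin be (S k) x) a (S k) /\
  ((k < n)%nat -> Derive_n (fun x => T x - lin be (S k) x) (S k) a = be (S k) * Derive_n (P (S k)) (S k) a).
Proof.
  intros HT Hz k Hk.
  assert (HT' : forall i, (i <= n)%nat -> Derive_n T i a = Dlin be (S n) i a).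
  { intros i Hi. specialize (Hz i ltac:(lia)). rewrite DmE in Hz by auto. lra. }
  split.
  - intros i Hi. rewrite DmE by (auto; lia). rewrite HT' by lia.
    rewrite (tailA be i (S n)) by lia. rewrite (tailA be i (S k)) by lia. ring.
  - intros Hkn. rewrite DmE by (auto; lia). rewrite HT' by lia.
    rewrite (tailA be (S k) (S n)) by lia. simpl. ring.
Qed.

Lemma linB be k : (k < n)%nat -> zat (lin be (S k)) b (n - k).
Proof. intros Hk i Hi. rewrite Dn_lin_ by lia. apply headB; lia. Qed.

Lemma c_pos c : zat (fun x => U x - lin c (S n) x) a (S n) -> forall k, (k < n)%nat -> 0 < c (S k).
Proof.
  intros Hc k Hk.
  set (Q := fun x => U x - lin c (S k) x).
  destruct (Qlem U c SM_U Hc k ltac:(lia)) as [zQ vQ]. specialize (vQ Hk).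
  fold Q in zQ, vQ.
  set (H := lin c (S k)).
  assert (HE : ER H) by (apply ER_lin_; lia).
  assert (HS : SM H) by apply HE.
  assert (SQ : SM Q) by (apply SM_minus; [apply SM_U|auto]).
  set (w := fun x => H x * E0 x).
  assert (Sw : SM w) by (apply SM_w; auto).
  assert (Ew1 : forall x, w x = 1 * 1 + (-1) * (Q x * E0 x)).
  { intros x. assert (E := E0U x). unfold w, Q, H.
    transitivity (E0 x * U x - (U x - lin c (S k) x) * E0 x). ring. rewrite E. ring. }
  set (g := Derive w).
  assert (Sg : SM g) by (apply SM_Derive; auto).
  destruct (zat_mult (S k) Q E0 a SQ SM_E0 zQ) as [zQE vQE].
  assert (Dg : forall i, Derive_n g i a = - Derive_n (fun x => Q x * E0 x) (S i) a).
  { intros i. unfold g. rewrite <- Derive_n_S. rewrite (Dn_ext w _ (S i) a Ew1).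
    rewrite (Dn_lin 1 (fun _ => 1)). rewrite Derive_n_const. ring. apply SM_const. apply SM_w; auto. }
  assert (zga : zat g a k).
  { intros i Hi. rewrite Dg. rewrite zQE by lia. ring. }
  assert (vga : Derive_n g k a = - (c (S k) * Derive_n (P (S k)) (S k) a * E0 a)).
  { rewrite Dg, vQE, vQ. ring. }
  assert (wa : w a = 1).
  { rewrite Ew1. rewrite (zat0' Q a (S k)) by (auto; lia). ring. }
  assert (zwb : zat w b (n - k)).
  { apply zat_mult; auto. apply SM_E0. apply linB; auto. }
  assert (wb : w b = 0) by (apply (zat0' w b (n - k)); auto; lia).
  assert (zgb : zat g b (n - k - 1)).
  { unfold g. replace (n - k - 1)%nat with (n - k - 1)%nat by lia. apply zatD'; auto; lia. }
  assert (ALL0 : (forall x, a <= x <= b -> Derive g x = 0) -> (exists y, a <= y <= b /\ g y = 0) -> False).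
  { intros D2 [y [Hy gy]].
    assert (G0 : forall x, a <= x <= b -> g x = 0).
    { intros x Hx. rewrite (const_D0 g a b Sg D2 x Hx). rewrite <- (const_D0 g a b Sg D2 y Hy). auto. }
    assert (E := const_D0 w a b Sw G0 b ltac:(lra)). lra. }
  assert (U2 : forall z, a < z < b -> g z <> 0).
  { intros z Hz Hgz. apply ALL0; [|exists z; split; auto; lra].
    destruct (Nat.eq_dec k 0) as [Hk0|Hk0].
    - subst k. assert (gb : g b = 0) by (apply (zat0' g b (n - 0 - 1)); auto; lia).
      destruct (rolle g z b Sg ltac:(lra) Hgz gb) as [x2 [Hx2 Dx2]].
      apply (KEY2 H w x2 1 b (n - 0 - 1 - 1) HE Sw (fun _ => eq_refl)); try lra.
      apply zat1; auto. apply zatD'; auto; lia. lia.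
    - assert (ga : g a = 0) by (apply (zat0' g a k); auto; lia).
      destruct (rolle g a z Sg ltac:(lra) ga Hgz) as [x1 [Hx1 Dx1]].
      destruct (Nat.eq_dec k (n - 1)) as [Hkn|Hkn].
      + apply (KEY2 H w a (k - 1) x1 1 HE Sw (fun _ => eq_refl)); try lra.
        apply zatD'; auto; lia. apply zat1; auto. lia.
      + assert (gb : g b = 0) by (apply (zat0' g b (n - k - 1)); auto; lia).
        destruct (rolle g z b Sg ltac:(lra) Hgz gb) as [x2 [Hx2 Dx2]].
        apply (KEY4 H w a (k - 1) x1 1 x2 1 b (n - k - 1 - 1) HE Sw (fun _ => eq_refl)); try lra.
        apply zatD'; auto; lia. apply zat1; auto. apply zat1; auto. apply zatD'; auto; lia. lia. }
  assert (U3 : Derive_n g k a <> 0).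
  { intros E. assert (zga' : zat g a (S k)).
    { intros i Hi. destruct (Nat.eq_dec i k) as [->|]; auto. apply zga; lia. }
    apply ALL0; [|exists a; split; [lra|apply (zat0' g a (S k)); auto; lia]].
    destruct (Nat.eq_dec k (n - 1)) as [Hkn|Hkn].
    - apply (KEY1 H w a k HE Sw (fun _ => eq_refl)); try lra. apply zat_D; auto. lia.
    - assert (ga : g a = 0) by (apply (zat0' g a (S k)); auto; lia).
      assert (gb : g b = 0) by (apply (zat0' g b (n - k - 1)); auto; lia).
      destruct (rolle g a b Sg Hab ga gb) as [x1 [Hx1 Dx1]].
      apply (KEY3 H w a k x1 1 b (n - k - 1 - 1) HE Sw (fun _ => eq_refl)); try lra.
      apply zat_D; auto. apply zat1; auto. apply zatD'; auto; lia. lia. }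
  assert (Sneg : Derive_n g k a < 0).
  { destruct (Rlt_or_le (Derive_n g k a) 0) as [Hl|Hl]; auto. exfalso.
    assert (Hp : 0 < Derive_n g k a) by lra.
    destruct (signA k g a Sg zga U3) as [d [Hd Hs]].
    destruct (pickA d Hd) as [x0 [Hx0 Hx0b]]. specialize (Hs x0 Hx0).
    assert (gx0 : 0 < g x0).
    { destruct (Rlt_or_le 0 (g x0)) as [|Hle]; auto.
      assert (g x0 * Derive_n g k a <= 0). { replace (g x0 * Derive_n g k a) with (- ((- g x0) * Derive_n g k a)) by ring.
        assert (0 <= (- g x0) * Derive_n g k a) by (apply Rmult_le_pos; lra). lra. } lra. }
    destruct (MVT_SM w a b Sw Hab) as [xi [Hxi Exi]]. rewrite wa, wb in Exi. fold g in Exi.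
    assert (gxi : g xi < 0).
    { destruct (Rlt_or_le (g xi) 0) as [|Hle]; auto.
      assert (0 <= g xi * (b - a)) by (apply Rmult_le_pos; lra). lra. }
    assert (Cg : continuity g) by (intros x; apply cont_SM; auto).
    destruct (Rle_dec x0 xi) as [Hle|Hle].
    - destruct (IVT_cor g x0 xi Cg Hle) as [z [Hz gz]].
      { assert (0 < g x0 * (- g xi)) by (apply Rmult_lt_0_compat; lra). lra. }
      apply (U2 z); auto; lra.
    - destruct (IVT_cor g xi x0 Cg ltac:(lra)) as [z [Hz gz]].
      { assert (0 < g x0 * (- g xi)) by (apply Rmult_lt_0_compat; lra). lra. }
      apply (U2 z); auto; lra. }
  rewrite vga in Sneg.
  assert (HP := PposA (S k) ltac:(lia)). assert (HE0 := E0_pos a).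
  destruct (Rlt_or_le 0 (c (S k))) as [|Hle]; auto. exfalso.
  assert (c (S k) * Derive_n (P (S k)) (S k) a <= 0).
  { replace (c (S k) * Derive_n (P (S k)) (S k) a) with (- ((- c (S k)) * Derive_n (P (S k)) (S k) a)) by ring.
    assert (0 <= (- c (S k)) * Derive_n (P (S k)) (S k) a) by (apply Rmult_le_pos; lra). lra. }
  assert (c (S k) * Derive_n (P (S k)) (S k) a * E0 a <= 0).
  { replace (c (S k) * Derive_n (P (S k)) (S k) a * E0 a) with
      (- ((- (c (S k) * Derive_n (P (S k)) (S k) a)) * E0 a)) by ring.
    assert (0 <= (- (c (S k) * Derive_n (P (S k)) (S k) a)) * E0 a) by (apply Rmult_le_pos; lra). lra. }
  lra.
Qed.

Lemma Dn_xt t j y : Derive_n (fun x => x - t) (S j) y = match j with O => 1 | S _ => 0 end.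
Proof.
  rewrite Derive_n_S. rewrite (Dn_ext (Derive (fun x => x - t)) (fun _ => 1)).
  destruct j. reflexivity. apply Derive_n_const.
  intros u. apply is_derive_unique. auto_derive; auto; ring.
Qed.

Lemma SM_xt t : SM (fun x => x - t).
Proof. apply SM_minus. apply SM_id. apply SM_const. Qed.

Lemma t_step c d : zat (fun x => U x - lin c (S n) x) a (S n) ->
  zat (fun x => X x - lin d (S n) x) a (S n) -> (forall k, (k <= n)%nat -> 0 < c k) ->
  forall k, (k < n)%nat -> a < d (S k) / c (S k) /\ d k / c k <= d (S k) / c (S k).
Proof.
  intros Hc Hd Cp k Hk.
  set (t := d (S k) / c (S k)).
  set (Q := fun x => U x - lin c (S k) x).
  set (Q2 := fun x => X x - lin d (S k) x).
  destruct (Qlem U c SM_U Hc k ltac:(lia)) as [zQ vQ]. specialize (vQ Hk). fold Q in zQ, vQ.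
  destruct (Qlem X d SM_X Hd k ltac:(lia)) as [zQ2 vQ2]. specialize (vQ2 Hk). fold Q2 in zQ2, vQ2.
  assert (SQ : SM Q) by (apply SM_minus; [apply SM_U|apply SM_lin_; lia]).
  assert (SQ2 : SM Q2) by (apply SM_minus; [apply SM_X|apply SM_lin_; lia]).
  set (N := fun x => 1 * Q2 x + (- t) * Q x).
  assert (SN : SM N) by (apply SM_lin; auto).
  assert (Cpk := Cp (S k) ltac:(lia)).
  assert (zN : zat N a (S (S k))).
  { intros i Hi. unfold N. rewrite Dn_lin by auto. destruct (Nat.eq_dec i (S k)) as [->|Hne].
    - rewrite vQ, vQ2. unfold t. field. lra.
    - rewrite zQ, zQ2 by lia. ring. }
  set (G := fun x => 1 * lin d (S k) x + (- t) * lin c (S k) x).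
  assert (GE : ER G) by (apply ER_lin; apply ER_lin_; lia).
  assert (SG : SM G) by apply GE.
  set (Psi := fun x => G x * E0 x).
  assert (SPsi : SM Psi) by (apply SM_w; auto).
  assert (EPsi : forall x, Psi x = 1 * (x - t) + (-1) * (N x * E0 x)).
  { intros x. assert (E := E0U x). unfold Psi, G, N, Q, Q2, X.
    transitivity (x * (E0 x * exp (l0 * x)) - t * (E0 x * U x) - (1 * (x * exp (l0 * x) - lin d (S k) x) + - t * (U x - lin c (S k) x)) * E0 x).
    unfold U. ring. unfold U in *. rewrite E. ring. }
  destruct (zat_mult (S (S k)) N E0 a SN SM_E0 zN) as [zNE _].
  assert (SNE : SM (fun x => N x * E0 x)) by (apply SM_w; auto).
  assert (DPsi : forall i, Derive_n Psi (S i) a = Derive_n (fun x => x - t) (S i) a - Derive_n (fun x => N x * E0 x) (S i) a).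
  { intros i. rewrite (Dn_ext _ _ _ _ EPsi). rewrite Dn_lin; auto using SM_xt. ring. }
  set (g := Derive Psi).
  assert (Sg : SM g) by (apply SM_Derive; auto).
  assert (ga : g a = 1).
  { change (Derive_n Psi 1 a = 1). rewrite DPsi, Dn_xt, zNE by lia. ring. }
  assert (zDga : zat (Derive g) a k).
  { intros i Hi. unfold g. rewrite <- !Derive_n_S. rewrite DPsi, Dn_xt, zNE by lia. ring. }
  assert (zGb : zat G b (n - k)).
  { unfold G. apply zat_lin; try (apply SM_lin_; lia); apply linB; auto. }
  destruct (zat_mult (n - k) G E0 b SG SM_E0 zGb) as [zPb vPb]. fold Psi in zPb, vPb.
  assert (Pb : Psi b = 0) by (apply (zat0' Psi b (n - k)); auto; lia).
  assert (zgb : zat g b (n - k - 1)) by (apply zatD'; auto; lia).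
  assert (U4 : forall z, a < z < b -> g z <> 0).
  { intros z Hz gz.
    assert (D2 : forall x, a <= x <= b -> Derive g x = 0).
    { destruct (Nat.eq_dec k (n - 1)) as [Hkn|Hkn].
      - apply (KEY1 G Psi a k GE SPsi (fun _ => eq_refl)); try lra; try lia; auto.
      - assert (gb : g b = 0) by (apply (zat0' g b (n - k - 1)); auto; lia).
        destruct (rolle g z b Sg ltac:(lra) gz gb) as [x2 [Hx2 Dx2]].
        apply (KEY3 G Psi a k x2 1 b (n - k - 1 - 1) GE SPsi (fun _ => eq_refl)); try lra; auto.
        apply zat1; auto. apply zatD'; auto; lia. lia. }
    assert (E := const_D0 g a b Sg D2 z ltac:(lra)). lra. }
  assert (Cg : continuity g) by (intros x; apply cont_SM; auto).
  assert (gpos : forall x, a < x < b -> 0 < g x).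
  { intros x Hx. destruct (Rlt_or_le 0 (g x)) as [|Hle]; auto. exfalso.
    destruct (IVT_cor g a x Cg ltac:(lra)) as [z [Hz gz]].
    { rewrite ga. lra. }
    destruct (Req_dec z a) as [->|Hza]. lra. apply (U4 z); auto; lra. }
  assert (Pneg : forall y, a <= y < b -> Psi y < 0).
  { intros y Hy. destruct (MVT_SM Psi y b SPsi ltac:(lra)) as [xi [Hxi Exi]]. fold g in Exi.
    assert (0 < g xi) by (apply gpos; lra).
    assert (0 < g xi * (b - y)) by (apply Rmult_lt_0_compat; lra). lra. }
  split.
  - assert (Pa := Pneg a ltac:(lra)). rewrite EPsi in Pa.
    rewrite (zat0' (fun x => N x * E0 x) a (S (S k))) in Pa by (auto; lia). lra.
  - assert (Ck := Cp k ltac:(lia)).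
    destruct (Rle_or_lt (d k / c k) t) as [|Hlt]; auto. exfalso.
    assert (Hdk : 0 < d k - t * c k).
    { apply (Rmult_lt_compat_r (c k)) in Hlt; auto. unfold Rdiv in Hlt.
      rewrite Rmult_assoc, Rinv_l in Hlt by lra. lra. }
    assert (VG : Derive_n G (n - k) b = (d k - t * c k) * Derive_n (P k) (n - k) b).
    { unfold G. rewrite Dn_lin by (apply SM_lin_; lia). rewrite !Dn_lin_ by lia. simpl.
      rewrite !(headB _ (n - k) k) by lia. ring. }
    rewrite VG in vPb.
    assert (Pk := PposB k ltac:(lia)). assert (Eb := E0_pos b).
    assert (Hsg : 0 < (-1) ^ (n - k) * Derive_n Psi (n - k) b).
    { rewrite vPb. replace ((-1) ^ (n - k) * ((d k - t * c k) * Derive_n (P k) (n - k) b * E0 b)) with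
        ((d k - t * c k) * ((-1) ^ (n - k) * Derive_n (P k) (n - k) b) * E0 b) by ring.
      apply Rmult_lt_0_compat; auto. apply Rmult_lt_0_compat; auto. }
    assert (Hne : Derive_n Psi (n - k) b <> 0).
    { intros E. rewrite E in Hsg. lra. }
    destruct (signB (n - k) Psi b SPsi zPb Hne) as [dl [Hdl Hs]].
    destruct (pickB dl Hdl) as [x [Hx1 Hx2]]. specialize (Hs x Hx1).
    assert (Px := Pneg x ltac:(lra)).
    assert (0 < (- Psi x) * ((-1) ^ (n - k) * Derive_n Psi (n - k) b)) by (apply Rmult_lt_0_compat; lra).
    lra.
Qed.

Lemma at0 T be : SM T -> zat (fun x => T x - lin be (S n) x) a (S n) -> T a = be 0%nat * P 0%nat a.
Proof.
  intros HT Hz. destruct (Qlem T be HT Hz 0%nat ltac:(lia)) as [z _].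
  assert (E := zat0' _ _ _ (le_n _) z). simpl in E. lra.
Qed.

Lemma R_ER T be : ER T -> ER (fun x => T x - lin be (S n) x).
Proof.
  intros HT. apply ER_ext with (fun x => 1 * T x + (-1) * lin be (S n) x). intros; ring.
  apply ER_lin; auto. apply ER_lin_; lia.
Qed.

Lemma onab T be : ER T -> zat (fun x => T x - lin be (S n) x) a (S n) ->
  forall x, a <= x <= b -> T x = lin be (S n) x.
Proof. intros HT Hz x Hx. assert (E := needA _ (R_ER T be HT) Hz x Hx). cbv beta in E. lra. Qed.

Lemma atb T be : ER T -> zat (fun x => T x - lin be (S n) x) a (S n) -> T b = be n * P n b.
Proof.
  intros HT Hz. rewrite (onab T be HT Hz b) by lra. simpl.
  assert (E : lin be n b = 0).
  { change (lin be n b) with (Derive_n (lin be n) 0 b). rewrite Dn_lin_ by lia. apply (headB be 0 n); lia. }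
  rewrite E. ring.
Qed.

Lemma UQ be : (forall x, a <= x <= b -> lin be (S n) x = 0) -> forall j, (j <= n)%nat -> be j = 0.
Proof.
  intros H.
  assert (HD : forall j, Derive_n (lin be (S n)) j a = 0).
  { intros j. apply (L_closed (lin be (S n)) a b); auto. apply SM_lin_; lia. }
  intros j. induction j as [j IH] using (well_founded_induction Wf_nat.lt_wf). intros Hj.
  specialize (HD j). rewrite Dn_lin_ in HD by lia. rewrite (tailA be j (S n)) in HD by lia.
  simpl in HD. rewrite Dlin_zero in HD by (intros i Hi; apply IH; lia).
  assert (Hp := PnzA j Hj).
  assert (E : be j * Derive_n (P j) j a = 0) by lra.
  apply Rmult_integral in E. destruct E; auto. contradiction.
Qed.

Lemma fold_C v l : fold_right Cplus v l = Cplus (fold_right Cplus (RtoC 0) l) v.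
Proof.
  induction l; simpl. apply C_ext; simpl; ring. rewrite IHl. apply C_ext; simpl; ring.
Qed.

Lemma BopE F ga x : a <= x <= b -> (forall k, F k = Cmult (RtoC (ga k)) (p k x)) ->
  forall m, (m <= S n)%nat -> fold_right Cplus (RtoC 0) (map F (seq 0 m)) = RtoC (lin ga m x).
Proof.
  intros Hx HF m. induction m; intros Hm. reflexivity.
  rewrite seq_S, map_app, fold_right_app. simpl. rewrite fold_C, IHm by lia.
  rewrite HF. destruct (Hpos m x ltac:(lia) Hx) as [Hs _].
  apply C_ext; simpl; rewrite Hs; unfold P, reP; ring.
Qed.

Lemma main_sec : exists t alpha : nat -> R,
    reproduces n a b l0 p t alpha /\
    (forall t' alpha' : nat -> R, reproduces n a b l0 p t' alpha' ->
       forall k, (k <= n)%nat -> t' k = t k /\ alpha' k = alpha k).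
Proof.
  destruct (kill U SM_U) as [c Hc]. destruct (kill X SM_X) as [d Hd].
  assert (Cp : forall k, (k <= n)%nat -> 0 < c k).
  { intros [|k] Hk.
    - assert (E := at0 U c SM_U Hc). assert (Hu := U_pos a). assert (Hp := PposA 0 ltac:(lia)).
      simpl in Hp. destruct (Rlt_or_le 0 (c 0%nat)) as [|Hle]; auto.
      assert (c 0%nat * P 0%nat a <= 0).
      { replace (c 0%nat * P 0%nat a) with (- ((- c 0%nat) * P 0%nat a)) by ring.
        assert (0 <= (- c 0%nat) * P 0%nat a) by (apply Rmult_le_pos; lra). lra. } lra.
    - apply c_pos; auto; lia. }
  set (t := fun k => d k / c k).
  assert (Hts := t_step c d Hc Hd Cp).
  assert (t0 : t 0%nat = a).
  { unfold t. assert (E1 := at0 U c SM_U Hc). assert (E2 := at0 X d SM_X Hd).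
    unfold X in E2. fold (U a) in E2. rewrite E1 in E2. assert (Hc0 := Cp 0%nat ltac:(lia)).
    assert (Hp := PposA 0 ltac:(lia)). simpl in Hp.
    assert (D0 : d 0%nat = a * c 0%nat).
    { apply (Rmult_eq_reg_r (P 0%nat a)). rewrite <- E2. ring. lra. }
    rewrite D0. field. lra. }
  assert (tn : t n = b).
  { unfold t. assert (E1 := atb U c ER_U Hc). assert (E2 := atb X d ER_X Hd).
    unfold X in E2. fold (U b) in E2. rewrite E1 in E2. assert (Hcn := Cp n ltac:(lia)).
    assert (Hp := PnzB n ltac:(lia)). rewrite Nat.sub_diag in Hp. simpl in Hp.
    assert (D0 : d n = b * c n).
    { apply (Rmult_eq_reg_r (P n b)). rewrite <- E2. ring. auto. }
    rewrite D0. field. lra. }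
  assert (tlo : forall k, (k <= n)%nat -> a <= t k).
  { intros [|k] Hk. lra. destruct (Hts k ltac:(lia)) as [H _]. unfold t; lra. }
  assert (thi : forall m, t (n - m)%nat <= b).
  { induction m. rewrite Nat.sub_0_r. lra.
    destruct (Nat.lt_ge_cases m n) as [Hm|Hm].
    - destruct (Hts (n - S m)%nat ltac:(lia)) as [_ H]. replace (S (n - S m)) with (n - m)%nat in H by lia.
      unfold t in *. lra.
    - replace (n - S m)%nat with (n - m)%nat by lia. auto. }
  assert (tb : forall k, (k <= n)%nat -> a <= t k <= b).
  { intros k Hk. split; auto. replace k with (n - (n - k))%nat by lia. apply thi. }
  set (alpha := fun k => c k * exp (- l0 * t k)).
  assert (EU : forall x, a <= x <= b -> U x = lin c (S n) x) by (apply onab; [apply ER_U|auto]).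
  assert (EX : forall x, a <= x <= b -> X x = lin d (S n) x) by (apply onab; [apply ER_X|auto]).
  assert (eq1 : forall y, exp (l0 * y) * exp (- l0 * y) = 1).
  { intros y. rewrite <- exp_plus. replace (l0 * y + - l0 * y) with 0 by ring. apply exp_0. }
  exists t, alpha. split.
  - split; [|split].
    + intros k Hk. split; auto. unfold alpha. apply Rmult_lt_0_compat; auto. apply exp_pos.
    + intros x Hx. unfold Bop. rewrite (BopE _ (fun k => exp (l0 * t k) * alpha k) x Hx) by (auto; intros; reflexivity).
      f_equal. change (exp (l0 * x)) with (U x). rewrite EU by auto. apply lin_ext.
      intros j Hj. unfold alpha. transitivity (c j * (exp (l0 * t j) * exp (- l0 * t j))). ring. rewrite eq1; ring.
    + intros x Hx. unfold Bop. rewrite (BopE _ (fun k => t k * exp (l0 * t k) * alpha k) x Hx) by (auto; intros; reflexivity).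
      f_equal. change (x * exp (l0 * x)) with (X x). rewrite EX by auto. apply lin_ext.
      intros j Hj. unfold alpha. transitivity (t j * c j * (exp (l0 * t j) * exp (- l0 * t j))). ring. rewrite eq1.
      unfold t. field. assert (Cj := Cp j ltac:(lia)). lra.
  - intros t' alpha' [Hb' [HU HX]] k Hk.
    set (ga := fun k => exp (l0 * t' k) * alpha' k).
    set (ga2 := fun k => t' k * exp (l0 * t' k) * alpha' k).
    assert (L1 : forall x, a <= x <= b -> lin ga (S n) x = U x).
    { intros x Hx. specialize (HU x Hx). unfold Bop in HU.
      rewrite (BopE _ ga x Hx) in HU by (auto; intros; reflexivity). injection HU; auto. }
    assert (L2 : forall x, a <= x <= b -> lin ga2 (S n) x = X x).
    { intros x Hx. specialize (HX x Hx). unfold Bop in HX.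
      rewrite (BopE _ ga2 x Hx) in HX by (auto; intros; reflexivity). injection HX; auto. }
    assert (G1 : ga k = c k).
    { assert (H0 := UQ (fun j => ga j - c j)).
      cut (ga k - c k = 0). lra. apply H0; auto. intros x Hx. rewrite (lin_minus ga c), L1, EU by auto. ring. }
    assert (G2 : ga2 k = d k).
    { assert (H0 := UQ (fun j => ga2 j - d j)).
      cut (ga2 k - d k = 0). lra. apply H0; auto. intros x Hx. rewrite (lin_minus ga2 d), L2, EX by auto. ring. }
    assert (Ck := Cp k Hk).
    assert (Tk : t' k = t k).
    { unfold t. rewrite <- G1, <- G2. unfold ga, ga2. assert (e := exp_pos (l0 * t' k)).
      destruct (Hb' k Hk) as [_ Ha']. field. lra. }
    split; auto. unfold alpha. rewrite <- Tk, <- G1. unfold ga.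
    transitivity (alpha' k * (exp (l0 * t' k) * exp (- l0 * t' k))). rewrite eq1; ring. ring.
Qed.

End Main.


Theorem theorem10 (a b l0 : R) (n : nat) (lam : nat -> C) (p : nat -> R -> C) :
  a < b -> (2 <= n)%nat ->
  ext_chebyshev (map lam (seq 2 (n - 1))) a b ->
  conj_closed (map lam (seq 2 (n - 1))) ->
  bernstein_basis (RtoC l0 :: RtoC l0 :: map lam (seq 2 (n - 1))) a b n p ->
  (forall k x, (k <= n)%nat -> a <= x <= b -> snd (p k x) = 0 /\ 0 <= fst (p k x)) ->
  exists t alpha : nat -> R,
    reproduces n a b l0 p t alpha /\
    (forall t' alpha' : nat -> R, reproduces n a b l0 p t' alpha' ->
       forall k, (k <= n)%nat -> t' k = t k /\ alpha' k = alpha k).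
Proof.
  intros Hab Hn HE HC HB HP. eapply main_sec; eauto.
Qed.
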